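(* Let $\beta_{\mathtt{H}},\beta_{\mathtt{L}},\gamma_{\mathtt{H}},\gamma_{\mathtt{L}}>0$ with $\beta_{\mathtt{H}}/\gamma_{\mathtt{H}}>\beta_{\mathtt{L}}/\gamma_{\mathtt{L}}$ and $\beta_{\mathtt{H}}>\beta_{\mathtt{L}}$, let $q_{\mathtt{HL}},q_{\mathtt{LH}}\ge 0$, $\alpha\in(0,1)$, and for $z_{\mathtt{S}}\in[0,1]$ set $\hat\beta_{\mathtt{Q}}(z_{\mathtt{S}}):=\beta_{\mathtt{Q}}(\alpha z_{\mathtt{S}}+1-z_{\mathtt{S}})$ for $\mathtt{Q}\in\{\mathtt{H},\mathtt{L}\}$. Suppose that for each $z_{\mathtt{S}}\in[0,1]$ the system \begin{align*} \dot{\mathtt{I}}_{\mathtt{H}}&=\hat\beta_{\mathtt{H}}(z_{\mathtt{S}})\mathtt{I}_{\mathtt{H}}(1-\mathtt{I}_{\mathtt{H}}-\mathtt{I}_{\mathtt{L}})+q_{\mathtt{LH}}\mathtt{I}_{\mathtt{L}}-(q_{\mathtt{HL}}+\gamma_{\mathtt{H}})\mathtt{I}_{\mathtt{H}},\\ \dot{\mathtt{I}}_{\mathtt{L}}&=\hat\beta_{\mathtt{L}}(z_{\mathtt{S}})\mathtt{I}_{\mathtt{L}}(1-\mathtt{I}_{\mathtt{H}}-\mathtt{I}_{\mathtt{L}})+q_{\mathtt{HL}}\mathtt{I}_{\mathtt{H}}-(q_{\mathtt{LH}}+\gamma_{\mathtt{L}})\mathtt{I}_{\mathtt{L}} \end{align*}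 has an endemic equilibrium $(\mathtt{I}^\star_{\mathtt{H}}(z_{\mathtt{S}}),\mathtt{I}^\star_{\mathtt{L}}(z_{\mathtt{S}}))\in(0,1)^2$. Then $\mathtt{I}^\star_{\mathtt{H}}(z_{\mathtt{S}})$ and $\mathtt{I}^\star_{\mathtt{L}}(z_{\mathtt{S}})$ are monotonically decreasing in $z_{\mathtt{S}}$.
   Context: Bi-virus SIS model with strains $\mathtt{H},\mathtt{L}$: $\mathtt{I}_{\mathtt{H}},\mathtt{I}_{\mathtt{L}}$ are infected fractions, $\beta$'s transmission rates, $\gamma$'s recovery rates, $q_{\mathtt{HL}},q_{\mathtt{LH}}$ mutation rates, $z_{\mathtt{S}}$ fraction of susceptibles adopting protection, protection scaling infection rates by $\alpha$. *)

(* Defs.v *)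
From Stdlib Require Import Reals Lra.
Open Scope R_scope.

Definition betahat (alpha beta zS : R) : R := beta * (alpha * zS + 1 - zS).

Definition rhsH (betaH gammaH qHL qLH alpha zS IH IL : R) : R :=
  betahat alpha betaH zS * IH * (1 - IH - IL) + qLH * IL - (qHL + gammaH) * IH.

Definition rhsL (betaL gammaL qHL qLH alpha zS IH IL : R) : R :=
  betahat alpha betaL zS * IL * (1 - IH - IL) + qHL * IH - (qLH + gammaL) * IL.

Definition endemic_equilibrium
  (betaH betaL gammaH gammaL qHL qLH alpha zS IH IL : R) : Prop :=
  0 < IH < 1 /\ 0 < IL < 1 /\
  rhsH betaH gammaH qHL qLH alpha zS IH IL = 0 /\
  rhsL betaL gammaL qHL qLH alpha zS IH IL = 0.

(* Main.v *)
Require Import Defs.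
From Stdlib Require Import Reals Lra Psatz.
Open Scope R_scope.

Lemma ratio_unique (A B C r1 r2 : R) :
  0 <= A -> 0 <= C -> (A = 0 -> C = 0 -> B < 0) ->
  0 < r1 -> 0 < r2 ->
  - A * r1 * r1 + B * r1 + C = 0 -> - A * r2 * r2 + B * r2 + C = 0 -> r1 = r2.
Proof.
  intros HA HC Hn H1 H2 E1 E2.
  destruct (Req_dec r1 r2) as [|Hne]; auto. exfalso.
  assert (Hf : (r1 - r2) * (- A * (r1 + r2) + B) = 0) by lra.
  apply Rmult_integral in Hf as [Hf|Hf]; [lra|].
  assert (HB : B = A * (r1 + r2)) by lra.
  rewrite HB in E1.
  assert (HC' : C = - (A * r1 * r2)) by lra.
  assert (0 <= A * r1 * r2) by (apply Rmult_le_pos; [apply Rmult_le_pos|]; lra).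
  assert (HC0 : C = 0) by lra.
  assert (HAr : A * (r1 * r2) = 0) by lra.
  assert (HA0 : A = 0).
  { apply Rmult_integral in HAr as [|HH]; auto. nra. }
  specialize (Hn HA0 HC0). subst. nra.
Qed.

Theorem lemma3 (betaH betaL gammaH gammaL qHL qLH alpha : R)
  (IHs ILs : R -> R) :
  0 < betaH -> 0 < betaL -> 0 < gammaH -> 0 < gammaL ->
  betaH / gammaH > betaL / gammaL ->
  betaH > betaL ->
  0 <= qHL -> 0 <= qLH ->
  0 < alpha < 1 ->
  (forall zS, 0 <= zS <= 1 ->
     endemic_equilibrium betaH betaL gammaH gammaL qHL qLH alpha zS (IHs zS) (ILs zS)) ->
  forall z1 z2, 0 <= z1 -> z1 < z2 -> z2 <= 1 ->
    IHs z2 < IHs z1 /\ ILs z2 < ILs z1.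
Proof.
  intros bH bL gH gL Hr _ qh ql Ha Heq z1 z2 h1 h12 h2.
  assert (Hcross : betaL * gammaH < betaH * gammaL).
  { apply Rmult_gt_compat_r with (r := gammaH * gammaL) in Hr; [|nra].
    field_simplify in Hr; lra. }
  destruct (Heq z1 ltac:(lra)) as [[x1a x1b] [[y1a y1b] [E11 E21]]].
  destruct (Heq z2 ltac:(lra)) as [[x2a x2b] [[y2a y2b] [E12 E22]]].
  unfold rhsH, rhsL, betahat in *.
  set (x1 := IHs z1) in *. set (y1 := ILs z1) in *.
  set (x2 := IHs z2) in *. set (y2 := ILs z2) in *.
  set (b1 := alpha * z1 + 1 - z1) in *. set (b2 := alpha * z2 + 1 - z2) in *.
  assert (Hb1 : 0 < b1) by (unfold b1; nra).
  assert (Hb12 : b2 < b1) by (unfold b1, b2; nra).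
  assert (Hb2 : 0 < b2) by (unfold b2; nra).
  set (S1 := 1 - x1 - y1) in *. set (S2 := 1 - x2 - y2) in *.
  assert (HS1 : 0 < S1).
  { assert (b1 * S1 * (betaH * x1 + betaL * y1) = gammaH * x1 + gammaL * y1) by lra.
    destruct (Rle_or_lt S1 0) as [Hle|]; auto.
    assert (0 <= b1 * (- S1) * (betaH * x1 + betaL * y1)) by (apply Rmult_le_pos; [apply Rmult_le_pos|]; nra).
    nra. }
  assert (HS2 : 0 < S2).
  { assert (b2 * S2 * (betaH * x2 + betaL * y2) = gammaH * x2 + gammaL * y2) by lra.
    destruct (Rle_or_lt S2 0) as [Hle|]; auto.
    assert (0 <= b2 * (- S2) * (betaH * x2 + betaL * y2)) by (apply Rmult_le_pos; [apply Rmult_le_pos|]; nra).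
    nra. }
  set (r1 := y1 / x1). set (r2 := y2 / x2).
  assert (Hy1 : y1 = r1 * x1) by (unfold r1; field; lra).
  assert (Hy2 : y2 = r2 * x2) by (unfold r2; field; lra).
  assert (Hr1 : 0 < r1) by (unfold r1; apply Rdiv_lt_0_compat; lra).
  assert (Hr2 : 0 < r2) by (unfold r2; apply Rdiv_lt_0_compat; lra).
  set (A := betaL * qLH).
  set (B := betaL * (qHL + gammaH) - betaH * (qLH + gammaL)).
  set (C := betaH * qHL).
  assert (Q1 : - A * r1 * r1 + B * r1 + C = 0).
  { assert (P : x1 * x1 * (- A * r1 * r1 + B * r1 + C) = 0).
    { unfold A, B, C.
      assert (T := f_equal2 (fun a c => betaL * y1 * a - betaH * x1 * c) E11 E21).
      simpl in T. rewrite Hy1 in T. lra. }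
    apply Rmult_integral in P as [P|P]; [nra|exact P]. }
  assert (Q2 : - A * r2 * r2 + B * r2 + C = 0).
  { assert (P : x2 * x2 * (- A * r2 * r2 + B * r2 + C) = 0).
    { unfold A, B, C.
      assert (T := f_equal2 (fun a c => betaL * y2 * a - betaH * x2 * c) E12 E22).
      simpl in T. rewrite Hy2 in T. lra. }
    apply Rmult_integral in P as [P|P]; [nra|exact P]. }
  assert (Req : r1 = r2).
  { apply (ratio_unique A B C); try assumption.
    - unfold A; nra.
    - unfold C; nra.
    - unfold A, B, C; intros HA0 HC0.
      assert (qLH = 0) by nra. assert (qHL = 0) by nra. subst. nra. }
  rewrite <- Req in Hy2.
  assert (K1 : x1 * (b1 * betaH * S1 + qLH * r1 - (qHL + gammaH)) = 0).
  { rewrite Hy1 in E11. lra. }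
  assert (K2 : x2 * (b2 * betaH * S2 + qLH * r1 - (qHL + gammaH)) = 0).
  { rewrite Hy2 in E12. lra. }
  apply Rmult_integral in K1 as [K1|K1]; [lra|].
  apply Rmult_integral in K2 as [K2|K2]; [lra|].
  assert (HbS : b1 * S1 = b2 * S2) by nra.
  assert (S1 < S2) by nra.
  unfold S1, S2 in *. rewrite Hy1, Hy2 in *.
  split; nra.
Qed.
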